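(* Let $(a,b,c)$ be a triple of non-negative integers with $a+b+c>1$. If $a\ge b+c$, or $b\ge c+a$, or $c\ge a+b$, then $GW_{\mathbb{C}P^1\times\mathbb{C}P^1\times\mathbb{C}P^1}(a,b,c)=0$.
   Context: $(a,b,c)$ denotes the class $aM_1+bM_2+cM_3$ where $M_1=[\mathbb{C}P^1\times\{pt\}\times\{pt\}]$, $M_2=[\{pt\}\times\mathbb{C}P^1\times\{pt\}]$, $M_3=[\{pt\}\times\{pt\}\times\mathbb{C}P^1]$. $GW_{(\mathbb{C}P^1)^3}(a,b,c)$ is the number of irreducible rational curves of class $(a,b,c)$ through $a+b+c$ generic points of $(\mathbb{C}P^1)^3$. *)

(* Defs.v *)
From mathcomp Require Import all_boot all_algebra.
From mathcomp Require Import complex.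
From mathcomp Require Import Rstruct.
From mathcomp Require Import mpoly.

Set Implicit Arguments.
Unset Strict Implicit.
Unset Printing Implicit Defensive.

Import GRing.Theory.
Local Open Scope ring_scope.

Definition CC : closedFieldType := (Rdefinitions.R)[i].

Section P1cube.
Variable K : fieldType.

(* Homogeneous coordinates of a point of P^1: a pair (x0, x1), required nonzero. *)
Definition nzv (x : K * K) : bool := (x.1 != 0) || (x.2 != 0).
Definition peq (x y : K * K) : bool := x.1 * y.2 == x.2 * y.1.

Definition pt3 := 'I_3 -> K * K.
Definition nz3 (P : pt3) : Prop := forall j, nzv (P j).
Definition peq3 (P Q : pt3) : Prop := forall j, peq (P j) (Q j).

Definition heval (d : nat) (f : 'I_d.+1 -> K) (t : K * K) : K :=
  \sum_(i < d.+1) f i * t.1 ^+ i * t.2 ^+ (d - i).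

(* A map P^1 -> (P^1)^3 of multidegree deg: in each factor j a pair of binary
   forms of degree deg j (to be checked without common zero). *)
Definition pmap (deg : 'I_3 -> nat) :=
  forall j : 'I_3, ('I_(deg j).+1 -> K) * ('I_(deg j).+1 -> K).

Definition peval (deg : 'I_3 -> nat) (phi : pmap deg) (t : K * K) : pt3 :=
  fun j => (heval (phi j).1 t, heval (phi j).2 t).

Definition is_morphism deg (phi : pmap deg) : Prop :=
  forall j t, nzv t -> nzv (peval phi t j).

(* phi is birational onto its image (generically injective): injective on P^1
   minus finitely many points. *)
Definition gen_injective deg (phi : pmap deg) : Prop :=
  exists S : seq (K * K), all nzv S /\
    forall t u, nzv t -> nzv u -> all (fun s => ~~ peq t s) S ->
      all (fun s => ~~ peq u s) S ->
      peq3 (peval phi t) (peval phi u) -> peq t u.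

(* An irreducible rational curve of class (deg 0, deg 1, deg 2) is the image of
   a morphism P^1 -> (P^1)^3 of that multidegree, birational onto its image. *)
Definition rat_param deg (phi : pmap deg) : Prop :=
  is_morphism phi /\ gen_injective phi.

Definition passes deg (phi : pmap deg) (P : pt3) : Prop :=
  exists t, nzv t /\ peq3 (peval phi t) P.

(* Two parametrizations define the same curve iff they have the same image. *)
Definition same_image deg (phi psi : pmap deg) : Prop :=
  (forall t, nzv t -> exists u, nzv u /\ peq3 (peval phi t) (peval psi u)) /\
  (forall u, nzv u -> exists t, nzv t /\ peq3 (peval phi t) (peval psi u)).

Definition curve_count deg (n : nat) (pts : 'I_n -> pt3) (N : nat) : Prop :=
  exists cs : 'I_N -> pmap deg,
    (forall k, rat_param (cs k) /\ forall i, passes (cs k) (pts i)) /\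
    (forall k l, k != l -> ~ same_image (cs k) (cs l)) /\
    (forall phi : pmap deg, rat_param phi -> (forall i, passes phi (pts i)) ->
       exists k, same_image phi (cs k)).

End P1cube.

Definition class3 (a b c : nat) : 'I_3 -> nat :=
  fun j => nth 0%N [:: a; b; c] j.

(* GW_{(CP^1)^3}(a,b,c) = N : for a generic configuration of a+b+c points of
   (CP^1)^3 (i.e. for all configurations (in the standard affine chart) off the
   zero set of some nonzero polynomial in their 3(a+b+c) affine coordinates),
   there are exactly N irreducible rational curves of class (a,b,c) through them. *)
Definition GW_P1cube_is (a b c N : nat) : Prop :=
  let n := (a + b + c)%N in
  exists g : {mpoly CC[n * 3]}, g != 0 /\
    forall x : 'I_(n * 3) -> CC, g.@[x] != 0 ->
      curve_count (class3 a b c)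
        (fun i : 'I_n => fun j : 'I_3 => (x (mxvec_index i j), 1)) N.

(* Main.v *)
Require Import Defs.
From mathcomp Require Import all_boot all_algebra.
From mathcomp Require Import complex Rstruct mpoly ring zify.
Set Implicit Arguments.
Unset Strict Implicit.
Unset Printing Implicit Defensive.
Import GRing.Theory.
Local Open Scope ring_scope.


Section Dep.
Variable K : fieldType.

Lemma msizeM_le' n (p q : {mpoly K[n]}) : (msize (p * q) <= (msize p + msize q).-1)%N.
Proof.
have [->|nzp] := eqVneq p 0; first by rewrite mul0r msize0.
have [->|nzq] := eqVneq q 0; first by rewrite mulr0 msize0.
by rewrite msizeM.
Qed.

Definition dg n (p : {mpoly K[n]}) k := (msize p <= k.+1)%N.

Lemma dgM n (p q : {mpoly K[n]}) k1 k2 : dg p k1 -> dg q k2 -> dg (p * q) (k1 + k2).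
Proof.
rewrite /dg => h1 h2; apply: leq_trans (msizeM_le' p q) _.
have := leq_add h1 h2; rewrite addSn addnS /=; case: (msize p + msize q)%N => //.
Qed.

Lemma dg1 n : dg (1 : {mpoly K[n]}) 0.
Proof. by rewrite /dg msize1. Qed.

Lemma dgX n (p : {mpoly K[n]}) k j : dg p k -> dg (p ^+ j) (k * j).
Proof.
move=> h; elim: j => [|j IH]; first by rewrite expr0 muln0 dg1.
by rewrite exprS mulnS; apply: dgM.
Qed.

Lemma dg_prod n (I : Type) (r : seq I) (F : I -> {mpoly K[n]}) k :
  (forall i, dg (F i) (k i)) -> dg (\prod_(i <- r) F i) (\sum_(i <- r) k i).
Proof.
move=> h; elim: r => [|x r IH]; first by rewrite !big_nil dg1.
by rewrite !big_cons; apply: dgM.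
Qed.

Lemma dg_le n (p : {mpoly K[n]}) k1 k2 : (k1 <= k2)%N -> dg p k1 -> dg p k2.
Proof. by rewrite /dg => h1 h2; apply: leq_trans h2 _. Qed.

Lemma lexp_base (a b e : nat) : (a <= b)%N -> (a ^ e <= b ^ e)%N.
Proof. by move=> h; elim: e => [|e IH]; rewrite ?expn0 // !expnS leq_mul. Qed.

Lemma count_ineq (N m e : nat) : (m < N)%N ->
  let D := ((N * e).+1 ^ N.-1)%N in
  ((N * (e * D)).+1 ^ m < D.+1 ^ N)%N.
Proof.
move=> hmN; set D := ((N * e).+1 ^ N.-1)%N; rewrite /=.
have D1 : (0 < D)%N by rewrite expn_gt0.
have h1 : ((N * (e * D)).+1 <= (N * e).+1 * D)%N.
  by rewrite mulSn mulnA addnC -addn1 leq_add2l.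
apply: (leq_ltn_trans (lexp_base _ h1)).
apply: (@leq_ltn_trans (((N * e).+1 * D) ^ N.-1)%N).
  apply: leq_pexp2l; first by rewrite muln_gt0 D1.
  by rewrite -ltnS (ltn_predK hmN).
have -> : (((N * e).+1 * D) ^ N.-1 = D ^ N)%N by rewrite expnMn -expnS (ltn_predK hmN).
by rewrite ltn_exp2r ?leqnn // (leq_ltn_trans _ hmN).
Qed.

Lemma nonfree_ker (r c : nat) (A : 'M[K]_(r, c)) : (c < r)%N ->
  exists v : 'rV_r, v != 0 /\ v *m A = 0.
Proof.
move=> hcr.
have nf : ~~ row_free A.
  by rewrite -row_leq_rank -ltnNge (leq_ltn_trans (rank_leq_col A)).
have nz : kermx A != 0 by rewrite kermx_eq0.
case: (boolP [exists i, row i (kermx A) != 0]).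
  move=> /existsP [i hi]; exists (row i (kermx A)); split => //.
  by rewrite -row_mul mulmx_ker row0.
move=> /existsPn hn; exfalso; move/negP: nz; apply; apply/eqP/row_matrixP => i.
by move: (hn i); rewrite negbK row0 => /eqP.
Qed.

Lemma alg_dep (m N e : nat) (P Q : 'I_N -> {mpoly K[m]}) : (m < N)%N ->
  (forall i, dg (P i) e /\ dg (Q i) e) ->
  exists G : {mpoly K[N]}, G != 0 /\
    forall p : 'I_m -> K, (forall i, (Q i).@[p] != 0) ->
      G.@[fun i => (P i).@[p] / (Q i).@[p]] = 0.
Proof.
move=> hmN hdg.
set D := ((N * e).+1 ^ N.-1)%N.
set E := (N * (e * D))%N.
pose Src := {ffun 'I_N -> 'I_D.+1}.
pose Tgt := {ffun 'I_m -> 'I_E.+1}.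
pose H (a : Src) := \prod_(i < N) (P i ^+ a i * Q i ^+ (D - a i)).
have dH : forall a, dg (H a) E.
  move=> a; rewrite /E -(card_ord N) -sum_nat_const; apply: dg_prod => i.
  have [h1 h2] := hdg i.
  apply: (@dg_le _ _ (e * a i + e * (D - a i))%N).
    by rewrite -mulnDr subnKC // -ltnS.
  by apply: dgM; apply: dgX.
pose monoT (b : Tgt) : 'X_{1..m} := [multinom (b i : nat) | i < m].
pose A := \matrix_(i < #|Src|, j < #|Tgt|) (H (enum_val i))@_(monoT (enum_val j)).
have hc : (#|Tgt| < #|Src|)%N by rewrite !card_ffun !card_ord; apply: count_ineq.
have [v [vnz vA]] := nonfree_ker A hc.
have S0 : \sum_i v 0 i *: H (enum_val i) = 0.
  apply/mpolyP => mu; rewrite mcoeff0 raddf_sum /=.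
  case: (boolP [forall k, mu k <= E]%N).
  - move/forallP => hle.
    pose b : Tgt := [ffun k => inord (mu k)].
    have hb : monoT b = mu by apply/mnmP => k; rewrite mnmE ffunE inordK // ltnS.
    move/matrixP: vA => /(_ 0 (enum_rank b)); rewrite !mxE => h.
    apply: (eq_trans _ h); apply: eq_bigr => i _.
    by rewrite mcoeffZ mxE enum_rankK hb.
  - move/forallPn => [k hk]; rewrite big1 // => i _.
    rewrite mcoeffZ; apply/eqP; rewrite mulf_eq0; apply/orP; right.
    rewrite mcoeff_eq0; apply: msize_mdeg_ge.
    apply: leq_trans (dH _) _; rewrite -ltnNge in hk.
    apply: leq_trans hk _; rewrite mdegE (bigD1 k) //=; exact: leq_addr.
pose monoS (a : Src) : 'X_{1..N} := [multinom (a i : nat) | i < N].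
have monoS_inj : injective monoS.
  move=> a1 a2 /mnmP h; apply/ffunP => k; apply: val_inj.
  by have := h k; rewrite !mnmE.
exists (\sum_i v 0 i *: 'X_[monoS (enum_val i)]); split.
  case/rV0Pn: vnz => i hi; apply/eqP => /(congr1 (mcoeff (monoS (enum_val i)))).
  rewrite mcoeff0 raddf_sum (bigD1 i) //= big1 ?addr0.
    by rewrite mcoeffZ mcoeffX eqxx mulr1; apply/eqP.
  move=> j hj; rewrite mcoeffZ mcoeffX.
  case: eqP => [/monoS_inj /enum_val_inj hji|]; last by rewrite mulr0.
  by rewrite hji eqxx in hj.
move=> p hQ.
set y := fun i => _.
have Cnz : \prod_k (Q k).@[p] ^+ D != 0.
  by rewrite prodf_seq_neq0; apply/allP => k _ /=; rewrite expf_neq0.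
apply/eqP; rewrite -(mulIr_eq0 _ (mulIf Cnz)); apply/eqP.
rewrite raddf_sum /= mulr_suml.
transitivity ((\sum_i v 0 i *: H (enum_val i)).@[p]); last by rewrite S0 meval0.
rewrite raddf_sum /=.
apply: eq_bigr => i _; rewrite mevalZ mevalX -mulrA mevalZ; congr (_ * _).
rewrite -big_split /= rmorph_prod; apply: eq_bigr => k _.
rewrite rmorphM !rmorphXn /= mnmE.
have hk : (enum_val i k <= D)%N by rewrite -ltnS.
have -> : (Q k).@[p] ^+ D = (Q k).@[p] ^+ (enum_val i k) * (Q k).@[p] ^+ (D - enum_val i k).
  by rewrite -exprD subnKC.
by rewrite mulrA /y -exprMn divfK.
Qed.
End Dep.


Section Forms.
Variable K : fieldType.

Definition isf (d : nat) (F : K * K -> K) := exists f : 'I_d.+1 -> K, forall u, F u = heval f u.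

Lemma isf1 : isf 0 (fun _ => 1).
Proof. by exists (fun _ => 1) => u; rewrite /heval big_ord1 /= !expr0 !mulr1. Qed.

Lemma isf0 d : isf d (fun _ => 0).
Proof. by exists (fun _ => 0) => u; rewrite /heval big1 // => i _; rewrite !mul0r. Qed.

Lemma isf_lin d (F G : K * K -> K) c : isf d F -> isf d G -> isf d (fun u => c * F u + G u).
Proof.
move=> [f hf] [g hg]; exists (fun i => c * f i + g i) => u.
rewrite hf hg /heval mulr_sumr -big_split /=; apply: eq_bigr => i _.
by rewrite !mulrDl !mulrA.
Qed.

Lemma isf_sum d k (F : 'I_k -> K * K -> K) : (forall i, isf d (F i)) ->
  isf d (fun u => \sum_(i < k) F i u).
Proof.
move=> h; elim: k F h => [|k IH] F h.
  by have [f hf] := isf0 d; exists f => u; rewrite big_ord0 -hf.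
have [f hf] := IH (fun i => F (lift ord0 i)) (fun i => h _).
have [g hg] := isf_lin 1 (h ord0) (IH (fun i => F (lift ord0 i)) (fun i => h _)).
by exists g => u; rewrite big_ord_recl -hg mul1r.
Qed.

Lemma isf_s d F : isf d F -> isf d.+1 (fun u => u.1 * F u).
Proof.
move=> [f hf]; exists (fun i => if unlift ord0 i is Some j then f j else 0) => u.
rewrite hf /heval [RHS]big_ord_recl /= unlift_none !mul0r add0r mulr_sumr.
apply: eq_bigr => i _; rewrite liftK /= subSS exprS; ring.
Qed.

Lemma isf_t d F : isf d F -> isf d.+1 (fun u => u.2 * F u).
Proof.
move=> [f hf]; exists (fun i => if unlift ord_max i is Some j then f j else 0) => u.
rewrite hf /heval [RHS]big_ord_recr /= unlift_none !mul0r addr0 mulr_sumr.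
apply: eq_bigr => i _.
have -> : widen_ord (leqnSn d.+1) i = lift ord_max i.
  by apply: val_inj; rewrite /= /bump leqNgt ltn_ord.
rewrite liftK subSn; last by rewrite -ltnS.
rewrite exprS; ring.
Qed.

Lemma isf_L d F a b : isf d F -> isf d.+1 (fun u => (a * u.1 + b * u.2) * F u).
Proof.
move=> h; have [f hf] := isf_lin a (isf_s h) (isf_lin b (isf_t h) (isf0 d.+1)).
by exists f => u; rewrite -hf; ring.
Qed.

Lemma isf_pow a1 b1 a2 b2 i j :
  isf (i + j) (fun u => (a1 * u.1 + b1 * u.2) ^+ i * (a2 * u.1 + b2 * u.2) ^+ j).
Proof.
elim: i => [|i IH].
  rewrite add0n; elim: j => [|j IH].
    by have [f hf] := isf1; exists f => u; rewrite -hf !expr0 mulr1.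
  have [f hf] := isf_L a2 b2 IH; exists f => u; rewrite -hf !expr0 !mul1r exprS //.
rewrite addSn; have [f hf] := isf_L a1 b1 IH; exists f => u; rewrite -hf exprS; ring.
Qed.

Lemma isf_scale d F c : isf d F -> isf d (fun u => c * F u).
Proof.
move=> h; have [f hf] := isf_lin c h (isf0 d); exists f => u; by rewrite -hf addr0.
Qed.

Lemma form_comp d (f : 'I_d.+1 -> K) (c1 c2 : K * K) :
  exists f' : 'I_d.+1 -> K, forall u,
    heval f' u = heval f (u.1 * c1.1 + u.2 * c2.1, u.1 * c1.2 + u.2 * c2.2).
Proof.
have : isf d (fun u => heval f (u.1 * c1.1 + u.2 * c2.1, u.1 * c1.2 + u.2 * c2.2)).
  rewrite /heval /=; apply: isf_sum => i.
  have := isf_scale (f i) (isf_pow c1.1 c2.1 c1.2 c2.2 i (d - i)).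
  rewrite subnKC; last by rewrite -ltnS.
  move=> [g hg]; exists g => u; rewrite -hg mulrA; rewrite [u.1 * c1.1]mulrC [u.2 * c2.1]mulrC [u.1 * c1.2]mulrC [u.2 * c2.2]mulrC //.
by move=> [g hg]; exists g => u; rewrite hg.
Qed.

Lemma heval_scale d (f : 'I_d.+1 -> K) c t :
  heval f (c * t.1, c * t.2) = c ^+ d * heval f t.
Proof.
rewrite /heval mulr_sumr; apply: eq_bigr => i _ /=.
rewrite !exprMn.
have -> : c ^+ d = c ^+ i * c ^+ (d - i) by rewrite -exprD subnKC // -ltnS.
ring.
Qed.

Lemma heval01 d (f : 'I_d.+1 -> K) : heval f (0, 1) = f ord0.
Proof.
rewrite /heval big_ord_recl /= expr0 expr1n !mulr1 big1 ?addr0 // => i _.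
by rewrite /= expr0n /= mulr0 mul0r.
Qed.

Lemma heval_div d (f : 'I_d.+1 -> K) c t :
  heval (fun k => f k / c) t = heval f t / c.
Proof. by rewrite /heval mulr_suml; apply: eq_bigr => i _; ring. Qed.

End Forms.


Section Proj.
Variable K : fieldType.

Definition det (t u : K * K) := t.1 * u.2 - t.2 * u.1.

Lemma obs_ratio (a b y : K) : nzv (a, b) -> peq (a, b) (y, 1) -> b != 0 /\ y = a / b.
Proof.
rewrite /nzv /peq /= mulr1 => hnz /eqP hab.
have bnz : b != 0.
  by apply/negP => /eqP b0; move: hnz; rewrite hab b0 mul0r eqxx.
by split => //; rewrite hab mulrC mulrA mulVf // mul1r.
Qed.

Lemma prop_of_det (t u : K * K) : nzv t -> nzv u -> det t u = 0 ->
  exists c, c != 0 /\ u = (c * t.1, c * t.2).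
Proof.
case: t => t1 t2; case: u => u1 u2; rewrite /nzv /det /= => ht hu /eqP; rewrite subr_eq0 => /eqP h.
have [t10|t1nz] := eqVneq t1 0.
  move: ht; rewrite t10 eqxx /= => t2nz.
  have u10 : u1 = 0.
    by move/eqP: h; rewrite t10 mul0r eq_sym mulf_eq0 (negbTE t2nz) => /eqP.
  move: hu; rewrite u10 eqxx /= => u2nz.
  exists (u2 / t2); split; first by rewrite mulf_neq0 ?invr_eq0.
  by rewrite mulr0 divfK.
have u1nz : u1 != 0.
  apply/negP => /eqP u10; move/eqP: h; rewrite u10 mulr0 mulf_eq0 (negbTE t1nz) /= => /eqP u20.
  by move: hu; rewrite u10 u20 eqxx.
exists (u1 / t1); split; first by rewrite mulf_neq0 ?invr_eq0.
congr pair; first by rewrite divfK.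
by apply: (mulfI t1nz); rewrite h; field.
Qed.

Lemma ratio_eq d (F G : 'I_d.+1 -> K) (t u : K * K) : nzv t -> nzv u -> det t u = 0 ->
  heval G t != 0 -> heval G u != 0 /\ heval F u / heval G u = heval F t / heval G t.
Proof.
move=> ht hu hd hG; have [c [cnz ->]] := prop_of_det ht hu hd.
rewrite !heval_scale; have cd : c ^+ d != 0 by rewrite expf_neq0.
split; first by rewrite mulf_neq0.
by rewrite invfM mulrACA divff // mul1r.
Qed.


Definition Mu (c1 c2 u : K * K) := (u.1 * c1.1 + u.2 * c2.1, u.1 * c1.2 + u.2 * c2.2).

Lemma heval_ext d (f g : 'I_d.+1 -> K) t : f =1 g -> heval f t = heval g t.
Proof. by move=> h; apply: eq_bigr => i _; rewrite h. Qed.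

Lemma coord_data d (F G : 'I_d.+1 -> K) (c1 c2 : K * K) (I : Type) (tt uu : I -> K * K) (i0 : I) :
  uu i0 = (0, 1) ->
  (forall i, exists k, k != 0 /\ Mu c1 c2 (uu i) = (k * (tt i).1, k * (tt i).2)) ->
  (forall i, heval G (tt i) != 0) ->
  exists Fn Gn : 'I_d.+1 -> K, Gn ord0 = 1 /\ forall i, heval Gn (uu i) != 0 /\
     heval Fn (uu i) / heval Gn (uu i) = heval F (tt i) / heval G (tt i).
Proof.
move=> hu0 hk hG.
have [F' hF'] := form_comp F c1 c2.
have [G' hG'] := form_comp G c1 c2.
have hval i (f f' : 'I_d.+1 -> K) : (forall u, heval f' u = heval f (Mu c1 c2 u)) ->
    exists k, k != 0 /\ heval f' (uu i) = k ^+ d * heval f (tt i) /\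
                        forall g g' : 'I_d.+1 -> K, (forall u, heval g' u = heval g (Mu c1 c2 u)) ->
                         heval g' (uu i) = k ^+ d * heval g (tt i).
  move=> hf; have [k [knz hM]] := hk i; exists k; split => //; split.
    by rewrite hf hM heval_scale.
  by move=> g g' hg; rewrite hg hM heval_scale.
set b0 := G' ord0.
have b0nz : b0 != 0.
  have [k [knz [_ h]]] := hval i0 F F' hF'.
  by rewrite /b0 -heval01 -hu0 (h G G' hG') mulf_neq0 ?expf_neq0.
exists (fun q => F' q / b0), (fun q => G' q / b0); split; first by rewrite divff.
move=> i; have [k [knz [hFi h]]] := hval i F F' hF'.
have hGi := h G G' hG'.
rewrite !heval_div hFi hGi; have kd : k ^+ d != 0 by rewrite expf_neq0.
have := hG i => Gnz.
split; first by rewrite !mulf_neq0 ?invr_eq0.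
move: (k ^+ d) kd (heval F (tt i)) (heval G (tt i)) Gnz b0nz => a anz f g gnz bnz.
by clearbody b0; field; rewrite gnz bnz anz.
Qed.

Lemma cramer (c1 c2 t : K * K) : det c1 t != 0 ->
  Mu c1 c2 (det t c2 / det c1 t, 1) = (det c1 c2 / det c1 t * t.1, det c1 c2 / det c1 t * t.2).
Proof.
case: c1 => a1 a2; case: c2 => b1 b2; case: t => t1 t2; rewrite /Mu /det /= => h.
by congr pair; field.
Qed.


Lemma det_neq0C (t u : K * K) : det t u != 0 -> det u t != 0.
Proof. have -> : det u t = - det t u by rewrite /det; ring.
by rewrite oppr_eq0. Qed.

End Proj.


Section Main.
Variable K : fieldType.
Variables (deg : 'I_3 -> nat) (n : nat) (j0 j1 j2 : 'I_3).
Hypotheses (h01 : j0 != j1) (h02 : j0 != j2) (h12 : j1 != j2).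
Hypotheses (hn3 : (3 <= n)%N) (hcnt : (2 * (deg j1 + deg j2) <= n)%N).

Definition PI := (('I_n + 'I_(n-3)) + (('I_(deg j1).+1 + 'I_(deg j1)) + ('I_(deg j2).+1 + 'I_(deg j2))))%type.
Definition mP := #|{: PI}|.
Definition V (q : PI) : {mpoly K[mP]} := 'X_(enum_rank q).

Lemma mP_lt : (mP < n * 3)%N.
Proof. rewrite /mP /PI !card_sum !card_ord; lia. Qed.

Definition tpt (i : 'I_n) : {mpoly K[mP]} * {mpoly K[mP]} :=
  if (i == 0 :> nat) then (0, 1) else if (i == 1 :> nat) then (1, 1)
  else if (i == 2 :> nat) then (1, 0)
  else (oapp (fun k => V (inl (inr k))) 0 (insub (i - 3)%N : option 'I_(n-3)), 1).

Definition hevalP d (A : 'I_d.+1 -> {mpoly K[mP]}) (T : {mpoly K[mP]} * {mpoly K[mP]}) :=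
  \sum_(k < d.+1) A k * T.1 ^+ k * T.2 ^+ (d - k).

Definition A1 k := V (inr (inl (inl k))).
Definition B1 (k : 'I_(deg j1).+1) := if unlift ord0 k is Some k' then V (inr (inl (inr k'))) else 1.
Definition A2 k := V (inr (inr (inl k))).
Definition B2 (k : 'I_(deg j2).+1) := if unlift ord0 k is Some k' then V (inr (inr (inr k'))) else 1.

Definition ij (k : 'I_(n * 3)) : 'I_n * 'I_3 := enum_val (cast_ord (esym (mxvec_cast n 3)) k).

Lemma ij_idx i j : ij (mxvec_index i j) = (i, j).
Proof. by rewrite /ij /mxvec_index cast_ordK enum_rankK. Qed.

Definition Pk (k : 'I_(n * 3)) :=
  let: (i, j) := ij k in
  if j == j0 then V (inl (inl i)) else if j == j1 then hevalP A1 (tpt i) else hevalP A2 (tpt i).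
Definition Qk (k : 'I_(n * 3)) :=
  let: (i, j) := ij k in
  if j == j0 then 1 else if j == j1 then hevalP B1 (tpt i) else hevalP B2 (tpt i).

Lemma dgV q : dg (V q) 1.
Proof. by rewrite /dg /V msizeX mdeg1. Qed.

Lemma dg0 k : dg (0 : {mpoly K[mP]}) k.
Proof. by rewrite /dg msize0. Qed.

Lemma dg1' k : dg (1 : {mpoly K[mP]}) k.
Proof. by rewrite /dg msize1. Qed.

Lemma dg_sum (I : Type) (r : seq I) (F : I -> {mpoly K[mP]}) k :
  (forall i, dg (F i) k) -> dg (\sum_(i <- r) F i) k.
Proof.
move=> h; apply: (big_ind (fun p => dg p k)) => //; first exact: dg0.
move=> p q; rewrite /dg => hp hq; apply: leq_trans (msizeD_le _ _) _.
by rewrite geq_max hp hq.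
Qed.

Lemma dg_tpt i : dg (tpt i).1 1 /\ dg (tpt i).2 1.
Proof.
rewrite /tpt; do 3 (case: ifP => _; first by split; [exact: dg0 || exact: dg1' | exact: dg0 || exact: dg1']).
split; last exact: dg1'.
by case: insub => [k|] /=; [exact: dgV | exact: dg0].
Qed.

Lemma dg_hevalP d A T : (forall k, dg (A k) 1) -> dg T.1 1 -> dg T.2 1 ->
  dg (@hevalP d A T) d.+1.
Proof.
move=> hA h1 h2; apply: dg_sum => k.
apply: (dg_le (k1 := (1 + 1 * k + 1 * (d - k))%N)).
  by rewrite !mul1n -addnA subnKC // -ltnS.
by apply: dgM; [apply: dgM|]; [|apply: dgX..].
Qed.

Lemma dgPQ k : dg (Pk k) (deg j1 + deg j2).+1 /\ dg (Qk k) (deg j1 + deg j2).+1.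
Proof.
rewrite /Pk /Qk; case: (ij k) => i j; have [t1 t2] := dg_tpt i.
case: ifP => _; first by split; [apply: dg_le (dgV _)|apply: dg1'].
have hB1 q : dg (B1 q) 1 by rewrite /B1; case: unlift => *; [exact: dgV | exact: dg1'].
have hB2 q : dg (B2 q) 1 by rewrite /B2; case: unlift => *; [exact: dgV | exact: dg1'].
case: ifP => _; split.
- by apply: (dg_le (k1 := (deg j1).+1)); rewrite ?ltnS ?leq_addr //; apply: dg_hevalP => // q; apply: dgV.
- by apply: (dg_le (k1 := (deg j1).+1)); rewrite ?ltnS ?leq_addr //; apply: dg_hevalP.
- by apply: (dg_le (k1 := (deg j2).+1)); rewrite ?ltnS ?leq_addl //; apply: dg_hevalP => // q; apply: dgV.
- by apply: (dg_le (k1 := (deg j2).+1)); rewrite ?ltnS ?leq_addl //; apply: dg_hevalP.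
Qed.



Lemma three_cases j : [|| j == j0, j == j1 | j == j2].
Proof.
move: h01 h02 h12; clear; move: j j0 j1 j2.
by do 4 case=> [[|[|[|?]]] ?] //=.
Qed.

Lemma lt0 : (0 < n)%N. Proof. lia. Qed.
Lemma lt1 : (1 < n)%N. Proof. lia. Qed.
Lemma lt2 : (2 < n)%N. Proof. lia. Qed.
Definition o0 : 'I_n := Ordinal lt0.
Definition o1 : 'I_n := Ordinal lt1.
Definition o2 : 'I_n := Ordinal lt2.

Lemma pt3_proof (k : 'I_(n-3)) : (k + 3 < n)%N.
Proof. have := ltn_ord k; lia. Qed.
Definition pt3idx (k : 'I_(n-3)) : 'I_n := Ordinal (pt3_proof k).

Definition ev (pv : PI -> K) : 'I_mP -> K := fun r => pv (enum_val r).

Lemma evV pv q : (V q).@[ev pv] = pv q.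
Proof. by rewrite /V mevalXU /ev enum_rankK. Qed.

Lemma hevalP_eval d (A : 'I_d.+1 -> {mpoly K[mP]}) T e :
  (hevalP A T).@[e] = heval (fun k => (A k).@[e]) ((T.1).@[e], (T.2).@[e]).
Proof.
rewrite /hevalP rmorph_sum; apply: eq_bigr => k _.
by rewrite !rmorphM !rmorphXn.
Qed.


Lemma core (x : 'I_(n * 3) -> K) (phi : Defs.pmap K deg) (t : 'I_n -> K * K) :
  is_morphism phi -> (forall i, nzv (t i)) ->
  (forall i, peq3 (peval phi (t i)) (fun j => (x (mxvec_index i j), 1))) ->
  (forall i : 'I_n, i != o2 -> x (mxvec_index i j0) != x (mxvec_index o2 j0)) ->
  x (mxvec_index o0 j0) != x (mxvec_index o1 j0) ->
  exists pv : PI -> K, forall k, (Qk k).@[ev pv] != 0 /\ x k = (Pk k).@[ev pv] / (Qk k).@[ev pv].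
Proof.
move=> hmor ht hpq hd2 hd01.
have F1 i j : heval (phi j).2 (t i) != 0 /\
    x (mxvec_index i j) = heval (phi j).1 (t i) / heval (phi j).2 (t i).
  exact: obs_ratio (hmor j (t i) (ht i)) (hpq i j).
have F2 i i' : x (mxvec_index i j0) != x (mxvec_index i' j0) -> det (t i) (t i') != 0.
  move=> hx; apply/negP => /eqP h0.
  have [_ e] := ratio_eq (phi j0).1 (ht i) (ht i') h0 (F1 i j0).1.
  by move: hx; rewrite (F1 i j0).2 (F1 i' j0).2 e eqxx.
have d01 := F2 _ _ hd01.
have d02 : det (t o0) (t o2) != 0 by apply: F2; apply: hd2.
have d12 : det (t o1) (t o2) != 0 by apply: F2; apply: hd2.
pose D := det (t o2) (t o0).
have Dnz : D != 0 by apply: det_neq0C.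
pose lam := det (t o1) (t o0) / D.
pose mu := det (t o2) (t o1) / D.
have lnz : lam != 0.
  by rewrite /lam mulf_neq0 ?invr_eq0 // det_neq0C.
have mnz : mu != 0.
  by rewrite /mu mulf_neq0 ?invr_eq0 // det_neq0C.
pose c1 := (lam * (t o2).1, lam * (t o2).2).
pose c2 := (mu * (t o0).1, mu * (t o0).2).
pose s (i : 'I_n) := det (t i) c2 / det c1 (t i).
pose uu (i : 'I_n) : K * K := if (i == 0 :> nat) then (0, 1) else if (i == 1 :> nat) then (1, 1)
  else if (i == 2 :> nat) then (1, 0) else (s i, 1).
have hk i : exists k, k != 0 /\ Mu c1 c2 (uu i) = (k * (t i).1, k * (t i).2).
  rewrite /uu; case: ifP => [/eqP i0|_].
    have -> : i = o0 by apply: val_inj.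
    by exists mu; split => //; rewrite /Mu /c1 /c2 /=; congr pair; ring.
  case: ifP => [/eqP i1|_].
    have -> : i = o1 by apply: val_inj.
    exists 1; split; first exact: oner_neq0.
    move: Dnz; rewrite /Mu /c1 /c2 /lam /mu /D /det /=.
    case: (t o0) => a1 a2; case: (t o1) => b1 b2; case: (t o2) => e1 e2 /= hD.
    by congr pair; field.
  case: ifP => [/eqP i2|i2].
    have -> : i = o2 by apply: val_inj.
    by exists lam; split => //; rewrite /Mu /c1 /c2 /=; congr pair; ring.
  have ni2 : i != o2 by apply/negP => /eqP e; rewrite e /= in i2.
  have dc1 : det c1 (t i) != 0.
    have h := det_neq0C (F2 _ _ (hd2 _ ni2)).
    have -> : det c1 (t i) = lam * det (t o2) (t i) by rewrite /det /c1 /=; ring.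
    by rewrite mulf_neq0.
  have dc12 : det c1 c2 != 0.
    have -> : det c1 c2 = lam * mu * D by rewrite /c1 /c2 /D /det /=; ring.
    by apply: mulf_neq0 => //; apply: mulf_neq0.
  by exists (det c1 c2 / det c1 (t i)); split; [rewrite mulf_neq0 ?invr_eq0 | exact: cramer].
have hu0 : uu o0 = (0, 1) by [].
have [Fn1 [Gn1 [G01 hc1]]] := coord_data (phi j1).1 hu0 hk (fun i => (F1 i j1).1).
have [Fn2 [Gn2 [G02 hc2]]] := coord_data (phi j2).1 hu0 hk (fun i => (F1 i j2).1).
pose pv (q : PI) : K := match q with
  | inl (inl i) => x (mxvec_index i j0)
  | inl (inr k) => s (pt3idx k)
  | inr (inl (inl q)) => Fn1 q
  | inr (inl (inr q)) => Gn1 (lift ord0 q)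
  | inr (inr (inl q)) => Fn2 q
  | inr (inr (inr q)) => Gn2 (lift ord0 q) end.
exists pv.
have tptE i : ((tpt i).1.@[ev pv], (tpt i).2.@[ev pv]) = uu i.
  rewrite /tpt /uu; case: ifP => i0; first by rewrite meval0 meval1.
  case: ifP => i1; first by rewrite meval1.
  case: ifP => i2; first by rewrite meval0 meval1.
  have i3 : (3 <= i)%N.
    by move: i0 i1 i2; case: (nat_of_ord i) => [|[|[|]]].
  rewrite meval1; case: insubP => [k0 _ ek0 | hn].
    rewrite /= evV /pv; congr (s _, 1); apply: val_inj => /=; rewrite ek0; lia.
  by exfalso; move/negP: hn; apply; have := ltn_ord i; lia.
have B1E q : (B1 q).@[ev pv] = Gn1 q.
  by rewrite /B1; case: unliftP => [q' ->|->]; rewrite ?evV ?meval1.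
have B2E q : (B2 q).@[ev pv] = Gn2 q.
  by rewrite /B2; case: unliftP => [q' ->|->]; rewrite ?evV ?meval1.
have A1E q : (A1 q).@[ev pv] = Fn1 q by rewrite /A1 evV.
have A2E q : (A2 q).@[ev pv] = Fn2 q by rewrite /A2 evV.
move=> k; case: (mxvec_indexP k) => i j; rewrite /Pk /Qk ij_idx.
have [->|nj0] := eqVneq j j0.
  by rewrite meval1 divr1 evV; split => //; exact: oner_neq0.

have [->|nj1] := eqVneq j j1.
  rewrite !hevalP_eval tptE.
  rewrite (heval_ext _ B1E) (heval_ext _ (A1E)).
  by have [h1 h2] := hc1 i; rewrite h2 -(F1 i j1).2.
have ej : j = j2 by move: (three_cases j); rewrite (negbTE nj0) (negbTE nj1) /= => /eqP.
rewrite ej !hevalP_eval tptE.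
rewrite (heval_ext _ B2E) (heval_ext _ A2E).
by have [h1 h2] := hc2 i; rewrite h2 -(F1 i j2).2.
Qed.


Lemma idx_inj (i i' : 'I_n) (j : 'I_3) : mxvec_index i j = mxvec_index i' j -> i = i'.
Proof. by move=> /(congr1 ij); rewrite !ij_idx => -[]. Qed.

Lemma XB_neq0 (u v : 'I_(n * 3)) : u != v -> ('X_u - 'X_v : {mpoly K[n * 3]}) != 0.
Proof.
move=> huv; apply/eqP => /(congr1 (mcoeff U_(u))).
rewrite mcoeffB !mcoeffXU eqxx eq_sym (negbTE huv) subr0 mcoeff0 => /eqP.
by rewrite oner_eq0.
Qed.

Lemma main_gen : exists g : {mpoly K[n * 3]}, g != 0 /\ forall x, g.@[x] != 0 ->
  forall phi : Defs.pmap K deg, is_morphism phi ->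
  ~ (forall i, passes phi (fun j => (x (mxvec_index i j), 1))).
Proof.
have [G [Gnz HG]] := alg_dep mP_lt dgPQ.
pose X i : {mpoly K[n * 3]} := 'X_(mxvec_index i j0).
have Xn i i' : i != i' -> X i - X i' != 0.
  move=> h; apply: XB_neq0; apply/negP => /eqP /idx_inj e; by rewrite e eqxx in h.
have o01 : o0 != o1 by [].
exists (G * ((X o0 - X o1) * \prod_(i | i != o2) (X i - X o2))); split.
  rewrite mulf_neq0 // mulf_neq0 ?Xn //.
  by apply/prodf_neq0 => i hi; apply: Xn.
move=> x; rewrite !mevalM !mulf_eq0 !negb_or => /and3P [hG h01' hpr] phi hmor hpass.
have hd01 : x (mxvec_index o0 j0) != x (mxvec_index o1 j0).
  by move: h01'; rewrite mevalB !mevalXU subr_eq0.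
have hd2 i : i != o2 -> x (mxvec_index i j0) != x (mxvec_index o2 j0).
  move=> hi; move: hpr; rewrite rmorph_prod => /prodf_neq0 /(_ i hi).
  by rewrite /= mevalB !mevalXU subr_eq0.
have [t ht] := fin_all_exists hpass.
have [pv hpv] := core hmor (fun i => (ht i).1) (fun i => (ht i).2) hd2 hd01.
have e : x =1 (fun k => (Pk k).@[ev pv] / (Qk k).@[ev pv]) := fun k => (hpv k).2.
have hz := HG (ev pv) (fun k => (hpv k).1).
by move: hG; rewrite (meval_eq _ e) hz eqxx.
Qed.

End Main.


Section Fin.
Variable K : fieldType.

Lemma heval_deg0 d (f : 'I_d.+1 -> K) t : d = 0%N -> heval f t = f ord0.
Proof. by move=> d0; subst d; rewrite /heval big_ord1 /= !expr0 !mulr1. Qed.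

Lemma degen (deg : 'I_3 -> nat) (n : nat) (j : 'I_3) : (1 < n)%N -> deg j = 0%N ->
  exists g : {mpoly K[n * 3]}, g != 0 /\ forall x, g.@[x] != 0 ->
  forall phi : Defs.pmap K deg, is_morphism phi ->
  ~ (forall i, passes phi (fun j => (x (mxvec_index i j), 1))).
Proof.
move=> hn hd.
have l0 : (0 < n)%N by lia.
pose a0 : 'I_n := Ordinal l0; pose a1 : 'I_n := Ordinal hn.
have ne : mxvec_index a0 j != mxvec_index a1 j.
  by apply/negP => /eqP /idx_inj.
exists ('X_(mxvec_index a0 j) - 'X_(mxvec_index a1 j)); split; first exact: XB_neq0.
move=> x; rewrite mevalB !mevalXU subr_eq0 => hx phi hmor hpass.
have hr (i : 'I_n) : x (mxvec_index i j) = (phi j).1 ord0 / (phi j).2 ord0.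
  have [t [ht hp]] := hpass i.
  have [_ ->] := obs_ratio (hmor j t ht) (hp j).
  by rewrite !heval_deg0.
by move: hx; rewrite !hr eqxx.
Qed.

Lemma count0 (deg : 'I_3 -> nat) (n : nat) (pts : 'I_n -> pt3 K) :
  (forall phi : Defs.pmap K deg, is_morphism phi -> ~ (forall i, passes phi (pts i))) ->
  curve_count deg pts 0.
Proof.
move=> H.
have cs : 'I_0 -> Defs.pmap K deg by case=> m hm; exfalso; rewrite ltn0 in hm.
exists cs; split; first by case.
split; first by case.
by move=> phi [hmor _] hp; exfalso; exact: H hmor hp.
Qed.

Lemma final_gen (deg : 'I_3 -> nat) (n : nat) (j0 j1 j2 : 'I_3) :
  j0 != j1 -> j0 != j2 -> j1 != j2 -> (1 < n)%N ->
  (deg j1 + deg j2 <= deg j0)%N -> (deg j0 + deg j1 + deg j2)%N = n ->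
  exists g : {mpoly K[n * 3]}, g != 0 /\ forall x, g.@[x] != 0 ->
  forall phi : Defs.pmap K deg, is_morphism phi ->
  ~ (forall i, passes phi (fun j => (x (mxvec_index i j), 1))).
Proof.
move=> h01 h02 h12 hn hle hsum.
case: (leqP 3 n) => h3.
  by apply: (main_gen K h01 h02 h12 h3); lia.
case: (eqVneq (deg j1) 0%N) => hd1; first exact: degen hn hd1.
by apply: (degen (j := j2) hn); lia.
Qed.

End Fin.

Local Close Scope ring_scope.

Theorem mainTheorem6 (a b c : nat) :
  (1 < a + b + c)%N ->
  ((b + c <= a)%N \/ (c + a <= b)%N \/ (a + b <= c)%N) ->
  GW_P1cube_is a b c 0.
Proof.
move=> hn hcase.
have H : forall j0 j1 j2 : 'I_3, j0 != j1 -> j0 != j2 -> j1 != j2 ->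
    (class3 a b c j1 + class3 a b c j2 <= class3 a b c j0)%N ->
    (class3 a b c j0 + class3 a b c j1 + class3 a b c j2 = a + b + c)%N ->
    GW_P1cube_is a b c 0.
  move=> j0 j1 j2 h01 h02 h12 hle hs.
  have [g [gnz hg]] := @final_gen CC _ _ _ _ _ h01 h02 h12 hn hle hs.
  by exists g; split => // x hx; apply: count0 => phi hmor; exact: hg x hx phi hmor.
case: hcase => [h|[h|h]].
- by move: (H (@Ordinal 3 0 isT) (@Ordinal 3 1 isT) (@Ordinal 3 2 isT)); rewrite /class3 /= => hh; apply: hh => //; lia.
- by move: (H (@Ordinal 3 1 isT) (@Ordinal 3 2 isT) (@Ordinal 3 0 isT)); rewrite /class3 /= => hh; apply: hh => //; lia.
- by move: (H (@Ordinal 3 2 isT) (@Ordinal 3 0 isT) (@Ordinal 3 1 isT)); rewrite /class3 /= => hh; apply: hh => //; lia.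
Qed.
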